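(* For every indexed forest $F$, the double forest polynomial $\mathfrak P_F(\mathbf x;\mathbf t)$ depends only on the variables $x_1,\dots,x_{\max\mathrm{Qdes}(F)}$ and $t_1,\dots,t_{(\max\mathrm{supp}(F))-1}$. In particular, if $\mathrm{supp}(F)\subseteq[n]$ then $\mathfrak P_F(\mathbf x;\mathbf t)\in\mathbb Z[t_1,\dots,t_{n-1}][x_1,\dots,x_n]$.
   Context: Convention: $\max\emptyset=0$ (so the claim for $F=\emptyset$, where $\mathfrak P_\emptyset=1$, is that it depends on no variables). Indexed forests: a binary plane tree is a rooted tree each of whose nodes is a leaf or an internal node with ordered left and right children. An indexed forest is a sequence $F=(T_1,T_2,\dots)$ of binary plane trees, all but finitely many being the one-node tree; its leaves are identified with $\mathbb N$ left to right; $\emptyset$ is the forest with no internal nodes. $\mathrm{supp}(F)$ is the set of leaves belonging to trees with at least one internal node. An internal node is terminal if both children are leaves; $\rho_F(v)$ is the leaf reached from internal node $v$ by repeatedly going to left children; $\mathrm{Qdes}(F)=\{\rho_F(v): v\text{ terminal}\}$; for $i\in\mathrm{Qdes}(F)$, $F/i$ is obtained by deleting the terminal node with $\rho_F(v)=i$ (replacing it and its two leaves by one leaf, relabeling leaves). Double forest polynomials: $\mathbf x=(x_1,x_2,\dots)$, $\mathbf t=(t_1,t_2,\dots)$. For $f\in\mathbb Z[\mathbf t][\mathbf x]$ let $R_i^-f=f(x_1,\dots,x_{i-1},t_i,x_i,\dots;\mathbf t)$, $R_i^+f=f(x_1,\dots,x_i,t_i,x_{i+1},\dots;\mathbf t)$,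 $E_if=(R_i^+f-R_i^-f)/(x_i-t_i)$. The $\mathfrak P_F(\mathbf x;\mathbf t)$ are the unique family of homogeneous polynomials (with $\deg x_i=\deg t_i=1$) such that $\mathfrak P_F(\mathbf t;\mathbf t)=\delta_{F,\emptyset}$ and $E_i\mathfrak P_F=\mathfrak P_{F/i}(\mathbf x;\widehat{\mathbf t}_i)$ if $i\in\mathrm{Qdes}(F)$, $0$ otherwise, with $\widehat{\mathbf t}_i=(t_1,\dots,t_{i-1},t_{i+1},\dots)$. *)

(* Defs.v *)
(* multinomials' monoid algebra {malg int[{cmonom V}]}
   gives the polynomial ring Z[x_1,x_2,...; t_1,t_2,...] in countably
   many variables. *)
From HB Require Import structures.
From mathcomp Require Import all_boot all_order all_algebra.
From mathcomp Require Import finmap.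
From mathcomp.multinomials Require Import monalg.

Set Implicit Arguments.
Unset Strict Implicit.
Unset Printing Implicit Defensive.

Import GRing.Theory.
Local Open Scope ring_scope.

(* Variable [inl k] stands for x_(k+1), [inr k] for t_(k+1).           *)
Definition var : Type := (nat + nat)%type.
Definition xtpoly : Type := {malg int[{cmonom var}]}.

Definition pvar (v : var) : xtpoly := << @ucm _ v >>.
(* paper (1-based) indexing: X i = x_i, T i = t_i for i >= 1 *)
Definition X (i : nat) : xtpoly := pvar (inl i.-1).
Definition T (i : nat) : xtpoly := pvar (inr i.-1).

Definition subst (s : var -> xtpoly) (p : xtpoly) : xtpoly :=
  mmap (fun c : int => c%:~R)
       (fun m : {cmonom var} => \prod_(v <- finsupp m) s v ^+ m v) p.

(* substitution given, in paper indexing, the image fx j of x_j and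
   the image ft j of t_j (j >= 1) *)
Definition subst2 (fx ft : nat -> xtpoly) : xtpoly -> xtpoly :=
  subst (fun v => match v with inl k => fx k.+1 | inr k => ft k.+1 end).

(* R_i^- f = f(x_1,...,x_{i-1}, t_i, x_i, x_{i+1}, ...; t) *)
Definition Rminus (i : nat) : xtpoly -> xtpoly :=
  subst2 (fun j => if (j < i)%N then X j else if j == i then T i else X j.-1) T.
(* R_i^+ f = f(x_1,...,x_i, t_i, x_{i+1}, ...; t) *)
Definition Rplus (i : nat) : xtpoly -> xtpoly :=
  subst2 (fun j => if (j <= i)%N then X j else if j == i.+1 then T i else X j.-1) T.
(* f(x; \hat t_i), \hat t_i = (t_1,...,t_{i-1},t_{i+1},...) *)
Definition that (i : nat) : xtpoly -> xtpoly :=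
  subst2 X (fun j => if (j < i)%N then T j else T j.+1).
Definition atT : xtpoly -> xtpoly := subst2 T T.

(* homogeneous for deg x_i = deg t_i = 1 *)
Definition homogeneous (p : xtpoly) : Prop :=
  exists d : nat, forall m : {cmonom var}, m \in msupp p -> mdeg m = d.

Definition vars_within (a b : nat) (p : xtpoly) : Prop :=
  forall m : {cmonom var}, m \in msupp p ->
  forall v : var, v \in finsupp m ->
    match v with inl k => (k.+1 <= a)%N | inr k => (k.+1 <= b)%N end.

Inductive btree : Type := Leaf | Node of btree & btree.

Definition is_node (t : btree) : bool := if t is Node _ _ then true else false.

Fixpoint nleaves (t : btree) : nat :=
  match t with Leaf => 1%N | Node l r => (nleaves l + nleaves r)%N end.

(* A forest (T_1, T_2, ...) is represented by the finite list of its trees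
   up to the last one having an internal node (all later trees are the
   one-node tree); normality makes the representation unique. *)
Definition normal (s : seq btree) : bool :=
  if s is [::] then true else is_node (last Leaf s).

Record forest : Type := Forest { trees : seq btree; _ : normal trees }.

Fixpoint dropLeaves (s : seq btree) : seq btree :=
  match s with Leaf :: s' => dropLeaves s' | _ => s end.

Definition strip (s : seq btree) : seq btree := rev (dropLeaves (rev s)).

Lemma normal_strip s : normal (strip s).
Proof.
rewrite /strip; elim: (rev s) => [//|t u IH] /=.
case: t => [//|l r]; by rewrite rev_cons /normal; case: (rev u) => [|a w];
  rewrite ?last_rcons //= last_rcons.
Qed.

Definition mkforest (s : seq btree) : forest := Forest (normal_strip s).

Definition is_empty_forest (F : forest) : bool := nilp (trees F).

(* Leaves are labelled 1, 2, 3, ... from left to right; [off] is the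
   number of leaves to the left of the current subtree. *)

(* Qdes: rho_F(v) for the terminal nodes v *)
Fixpoint qdesT (off : nat) (t : btree) : seq nat :=
  match t with
  | Leaf => [::]
  | Node Leaf Leaf => [:: off.+1]
  | Node l r => qdesT off l ++ qdesT (off + nleaves l) r
  end.

Fixpoint qdesS (off : nat) (s : seq btree) : seq nat :=
  match s with
  | [::] => [::]
  | t :: s' => qdesT off t ++ qdesS (off + nleaves t) s'
  end.

Definition Qdes (F : forest) : seq nat := qdesS 0 (trees F).

Fixpoint suppS (off : nat) (s : seq btree) : seq nat :=
  match s with
  | [::] => [::]
  | t :: s' => (if is_node t then iota off.+1 (nleaves t) else [::])
               ++ suppS (off + nleaves t) s'
  end.

Definition supp (F : forest) : seq nat := suppS 0 (trees F).

(* F/i : delete the terminal node v with rho_F(v) = i *)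
Fixpoint contrT (i off : nat) (t : btree) : btree :=
  match t with
  | Leaf => Leaf
  | Node Leaf Leaf => if off.+1 == i then Leaf else Node Leaf Leaf
  | Node l r => Node (contrT i off l) (contrT i (off + nleaves l) r)
  end.

Fixpoint contrS (i off : nat) (s : seq btree) : seq btree :=
  match s with
  | [::] => [::]
  | t :: s' => contrT i off t :: contrS i (off + nleaves t) s'
  end.

Definition contract (F : forest) (i : nat) : forest :=
  mkforest (contrS i 0 (trees F)).

(* E_i f = g  is expressed as  (x_i - t_i) g = R_i^+ f - R_i^- f.       *)
Definition is_double_forest_family (P : forest -> xtpoly) : Prop :=
  forall F : forest,
    homogeneous (P F) /\
    atT (P F) = (if is_empty_forest F then 1 else 0) /\
    (forall i : nat, (1 <= i)%N ->
       Rplus i (P F) - Rminus i (P F) =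
       (if i \in Qdes F then (X i - T i) * that i (P (contract F i)) else 0)).

(* Main.v *)
Require Import Defs.
From HB Require Import structures.
From mathcomp Require Import all_boot all_order all_algebra.
From mathcomp Require Import finmap.
From mathcomp.multinomials Require Import monalg.
From mathcomp Require Import zify ring.
Set Implicit Arguments. Unset Strict Implicit. Unset Printing Implicit Defensive.
Import GRing.Theory.

Fixpoint nnodes (t : btree) : nat :=
  match t with Leaf => 0 | Node l r => (nnodes l + nnodes r).+1 end.
Definition nodesF (F : forest) : nat := sumn (map nnodes (trees F)).

Lemma qdesT_N off l r : qdesT off (Node l r) =
  if is_node l || is_node r then qdesT off l ++ qdesT (off + nleaves l) r else [:: off.+1].
Proof. by case: l => [|? ?]; case: r => [|? ?]. Qed.

Lemma contrT_N i off l r : contrT i off (Node l r) =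
  if is_node l || is_node r then Node (contrT i off l) (contrT i (off + nleaves l) r)
  else (if off.+1 == i then Leaf else Node Leaf Leaf).
Proof. by case: l => [|? ?]; case: r => [|? ?]. Qed.

Lemma nleaves_pos t : (0 < nleaves t)%N.
Proof. elim: t => //= l IHl r IHr; lia. Qed.

Lemma qdesT_bound off t x : x \in qdesT off t -> (off < x)%N /\ (x.+1 <= off + nleaves t)%N.
Proof.
elim: t off => [|l IHl r IHr] off //; rewrite qdesT_N; case: ifP => hn.
  have := nleaves_pos l; have := nleaves_pos r.
  by rewrite mem_cat => ? ? /orP[/IHl|/IHr] /=; lia.
case: l r hn {IHl IHr} => [|? ?] [|? ?] //= _; rewrite inE => /eqP ->; lia.
Qed.

Lemma qdesT_node off t x : x \in qdesT off t -> is_node t.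
Proof. by case: t. Qed.

Lemma contrT_notin i off t : i \notin qdesT off t -> contrT i off t = t.
Proof.
elim: t off => [|l IHl r IHr] off //; rewrite qdesT_N contrT_N; case: ifP => hn.
  by rewrite mem_cat negb_or => /andP[/IHl -> /IHr ->].
by rewrite inE eq_sym => /negPf ->; case: l r hn {IHl IHr} => [|? ?] [|? ?].
Qed.

Lemma contrT_in i off t : i \in qdesT off t ->
  nleaves (contrT i off t) = (nleaves t).-1 /\ (nnodes (contrT i off t) < nnodes t)%N.
Proof.
elim: t off => [|l IHl r IHr] off //; rewrite qdesT_N contrT_N; case: ifP => hn; last first.
  by case: l r hn {IHl IHr} => [|? ?] [|? ?] //= _; rewrite inE eq_sym => ->.
have pl := nleaves_pos l; have pr := nleaves_pos r.
rewrite mem_cat; case: (boolP (i \in qdesT off l)) => hl /=.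
  have [e1 e2] := IHl _ hl.
  have hr : i \notin qdesT (off + nleaves l) r.
    apply/negP => /qdesT_bound; have := qdesT_bound hl; lia.
  rewrite (contrT_notin hr) e1; lia.
move=> hr; have [e1 e2] := IHr _ hr; rewrite (contrT_notin hl) e1; lia.
Qed.

Lemma qdesS_bound off s x : x \in qdesS off s -> (off < x)%N.
Proof.
elim: s off => [|t s IH] off //=; rewrite mem_cat => /orP[/qdesT_bound|/IH]; first by case.
have := nleaves_pos t; lia.
Qed.

Lemma contrS_small i off s : (i <= off)%N -> contrS i off s = s.
Proof.
elim: s off => [|t s IH] off //= h; rewrite IH; last by lia.
rewrite contrT_notin //; apply/negP => /qdesT_bound; lia.
Qed.

Lemma suppS_shift off s j : j \in suppS off s -> j.+1 \in suppS off.+1 s.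
Proof.
elim: s off => [|t s IH] off //=; rewrite !mem_cat => /orP[h|/IH h].
  by case: (is_node t) h => //; rewrite !mem_iota => h; apply/orP; left; lia.
by apply/orP; right; rewrite addSn.
Qed.

Lemma qdes_supp off s x : x \in qdesS off s -> x.+1 \in suppS off s.
Proof.
elim: s off => [|t s IH] off //=; rewrite !mem_cat => /orP[h|/IH ->]; last by rewrite orbT.
rewrite (qdesT_node h) mem_iota; have := qdesT_bound h; lia.
Qed.

Lemma contr_supp off s i j : i \in qdesS off s -> j \in suppS off (contrS i off s) ->
  (j < i)%N || (j.+1 \in suppS off s).
Proof.
elim: s off => [|t s IH] off //=; rewrite mem_cat.
have pt := nleaves_pos t.
case: (boolP (i \in qdesT off t)) => ht /= hi.
  have [e1 _] := contrT_in ht; have hb := qdesT_bound ht.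
  rewrite contrS_small; last by lia.
  rewrite mem_cat e1 => /orP[hj|hj].
    rewrite (qdesT_node ht) mem_cat mem_iota.
    by case: (is_node _) hj => //; rewrite mem_iota => hj; apply/orP; right; apply/orP; left; lia.
  have := suppS_shift hj; rewrite (_ : (off + (nleaves t).-1).+1 = off + nleaves t)%N; last by lia.
  by move=> h; rewrite mem_cat h !orbT.
rewrite (contrT_notin ht) mem_cat => /orP[hj|hj].
  have := qdesS_bound hi; case: (is_node t) hj => //; rewrite mem_iota => hj hb.
  apply/orP; left; lia.
by have := IH _ hi hj; case/orP => [->//|h]; rewrite mem_cat h !orbT.
Qed.

Lemma contr_nodes off s i : i \in qdesS off s ->
  (sumn (map nnodes (contrS i off s)) < sumn (map nnodes s))%N.
Proof.
elim: s off => [|t s IH] off //=; rewrite mem_cat.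
case: (boolP (i \in qdesT off t)) => ht /= hi.
  have [_ e2] := contrT_in ht; have hb := qdesT_bound ht.
  rewrite contrS_small; last by lia.
  lia.
rewrite (contrT_notin ht); have := IH _ hi; lia.
Qed.

Lemma dropLeavesE u : exists k, u = nseq k Leaf ++ dropLeaves u.
Proof.
elim: u => [|t u [k IH]]; first by exists 0%N.
case: t => [|l r] /=; first by exists k.+1 => /=; rewrite -IH.
by exists 0%N.
Qed.

Lemma rev_nseqL k : rev (nseq k Leaf) = nseq k Leaf.
Proof. elim: k => //= k IH; rewrite rev_cons IH; by elim: k {IH} => //= k ->. Qed.

Lemma stripE s : exists k, s = strip s ++ nseq k Leaf.
Proof.
have [k e] := dropLeavesE (rev s); exists k.
rewrite /strip; set d := dropLeaves (rev s).
by rewrite -[in LHS](revK s) e rev_cat rev_nseqL.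
Qed.

Lemma suppS_cat off a b :
  suppS off (a ++ b) = suppS off a ++ suppS (off + sumn (map nleaves a)) b.
Proof.
elim: a off => [|t a IH] off /=; first by rewrite addn0.
by rewrite IH catA addnA.
Qed.

Lemma suppS_nseq off k : suppS off (nseq k Leaf) = [::].
Proof. by elim: k off => //= k IH off; rewrite IH. Qed.

Lemma supp_strip s : suppS 0 (strip s) = suppS 0 s.
Proof.
have [k e] := stripE s.
by rewrite [in RHS]e suppS_cat suppS_nseq cats0.
Qed.

Lemma nodes_strip s : sumn (map nnodes (strip s)) = sumn (map nnodes s).
Proof.
have [k e] := stripE s.
rewrite [in RHS]e map_cat sumn_cat (_ : sumn (map nnodes (nseq k Leaf)) = 0%N) ?addn0 //.
by elim: k {e}.
Qed.

Lemma F1 F i : i \in Qdes F -> i.+1 \in supp F.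
Proof. exact: qdes_supp. Qed.

Lemma F2 F i j : i \in Qdes F -> j \in supp (contract F i) ->
  (j.+1 <= \max_(x <- supp F) x)%N.
Proof.
move=> hi; rewrite /supp /contract /= supp_strip => hj.
have h1 := @leq_bigmax_seq _ (supp F) xpredT id _ (F1 hi) isT.
case/orP: (contr_supp hi hj) => [hji|hj1].
  by apply: (leq_trans _ h1); rewrite ltnS ltnW.
exact: (@leq_bigmax_seq _ (supp F) xpredT id _ hj1 isT).
Qed.

Lemma F3 F i : i \in Qdes F -> (nodesF (contract F i) < nodesF F)%N.
Proof. by move=> hi; rewrite /nodesF /contract /= nodes_strip; apply: contr_nodes. Qed.
Local Open Scope ring_scope.

Definition hs (s : var -> xtpoly) (m : {cmonom var}) : xtpoly :=
  \prod_(v <- finsupp m) s v ^+ m v.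

Lemma substE s p : subst s p = \sum_(m <- msupp p) (p@_m)%:~R * hs s m.
Proof. by []. Qed.

Lemma hsEw s (m : {cmonom var}) (d : {fset var}) : (finsupp m `<=` d)%fset ->
  hs s m = \prod_(v <- d) s v ^+ m v.
Proof.
move=> le; rewrite /hs (big_fset_incl _ le) // => v _ /negPf.
by rewrite -cmE_neq0 => /negbFE/eqP ->; rewrite expr0.
Qed.

Lemma hs_mmorph s : mmorphism (hs s).
Proof.
split.
  move=> m1 m2 /=.
  rewrite (@hsEw s (mmul m1 m2) (finsupp m1 `|` finsupp m2)%fset) ?mdomD //.
  rewrite (@hsEw s m1 (finsupp m1 `|` finsupp m2)%fset) ?fsubsetUl //.
  rewrite (@hsEw s m2 (finsupp m1 `|` finsupp m2)%fset) ?fsubsetUr //.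
  by rewrite -big_split /=; apply: eq_bigr => v _; rewrite cmM exprD.
by rewrite /hs mdom1 big_seq_fset0.
Qed.

HB.instance Definition _ s := isMultiplicative.Build _ _ (hs s) (hs_mmorph s).

Lemma substE2 s p : subst s p = mmap intr (hs s) p.
Proof. by []. Qed.

Lemma subst_is_additive s : zmod_morphism (subst s).
Proof. move=> p q; rewrite !substE2; exact: mmapB. Qed.

Lemma subst_is_multiplicative s : monoid_morphism (subst s).
Proof.
have := @mmap_is_multiplicative _ int xtpoly intr (hs s).
by case=> h1 h2; split => [|p q]; rewrite !substE2 ?h1 ?h2.
Qed.

HB.instance Definition _ s := GRing.isZmodMorphism.Build _ _ (subst s) (subst_is_additive s).
HB.instance Definition _ s := GRing.isMonoidMorphism.Build _ _ (subst s) (subst_is_multiplicative s).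

Lemma subst_pvar s v : subst s (pvar v) = s v.
Proof.
rewrite substE2 /pvar mmapU /hs mdomU big_seq_fset1 cmUU expr1.
by rewrite mul1r.
Qed.
Definition vset (Q : pred var) (p : xtpoly) : Prop :=
  forall m : {cmonom var}, m \in msupp p -> forall v, v \in finsupp m -> Q v.

Lemma vset_mono (Q1 Q2 : pred var) p : (forall v, Q1 v -> Q2 v) -> vset Q1 p -> vset Q2 p.
Proof. by move=> h hp m hm v hv; apply/h/(hp m hm v hv). Qed.

Lemma vset_and (Q1 Q2 : pred var) p : vset Q1 p -> vset Q2 p -> vset (predI Q1 Q2) p.
Proof. by move=> h1 h2 m hm v hv; rewrite /= (h1 m hm v hv) (h2 m hm v hv). Qed.

Lemma vset0 Q : vset Q 0.
Proof. by move=> m; rewrite msupp0 inE. Qed.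

Lemma vsetD Q p q : vset Q p -> vset Q q -> vset Q (p + q).
Proof.
move=> hp hq m /(fsubsetP (msuppD_le p q)); rewrite inE => /orP [] hm.
  exact: hp. exact: hq.
Qed.

Lemma vsetN Q p : vset Q p -> vset Q (- p).
Proof. by move=> hp m; rewrite msuppN; apply: hp. Qed.

Lemma vsetB Q p q : vset Q p -> vset Q q -> vset Q (p - q).
Proof. by move=> hp hq; apply: vsetD => //; apply: vsetN. Qed.

Lemma vsetM Q p q : vset Q p -> vset Q q -> vset Q (p * q).
Proof.
move=> hp hq m /msuppM_le [m1 [m2 [h1 h2 ->]]] v.
rewrite mdomD inE => /orP [] hv. exact: (hp m1). exact: (hq m2).
Qed.

Lemma vset1 Q : vset Q 1.
Proof.
move=> m; rewrite -mcoeff_neq0 mcoeff1.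
have [-> _|ne] := eqVneq m mone; last by rewrite eqxx.
by move=> v; rewrite mdom1 inE.
Qed.

Lemma vset_sum Q (I : Type) (r : seq I) (F : I -> xtpoly) :
  (forall i, vset Q (F i)) -> vset Q (\sum_(i <- r) F i).
Proof.
move=> h; elim: r => [|a r IH]; first by rewrite big_nil; apply: vset0.
by rewrite big_cons; apply: vsetD.
Qed.

Lemma vset_prod Q (I : Type) (r : seq I) (P : pred I) (F : I -> xtpoly) :
  (forall i, P i -> vset Q (F i)) -> vset Q (\prod_(i <- r | P i) F i).
Proof.
move=> h; elim: r => [|a r IH]; first by rewrite big_nil; apply: vset1.
by rewrite big_cons; case: ifP => // hP; apply: vsetM => //; apply: h.
Qed.

Lemma vsetX Q p n : vset Q p -> vset Q (p ^+ n).
Proof.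
move=> hp; elim: n => [|n IH]; first by rewrite expr0; apply: vset1.
by rewrite exprS; apply: vsetM.
Qed.

Lemma vset_int Q (c : int) : vset Q (c%:~R).
Proof.
have hn n : vset Q (n%:R) by elim: n => [|n IH]; [apply: vset0| rewrite mulrS; apply: vsetD => //; apply: vset1].
case: c => n; first exact: hn.
by rewrite NegzE mulrNz; apply: vsetN; apply: hn.
Qed.

Lemma vset_pvar (Q : pred var) v : Q v -> vset Q (pvar v).
Proof.
move=> hv m; rewrite /pvar (@msuppU1 _ int (@ucm var v)) => /fset1P ->.
by rewrite mdomU => w /fset1P ->.
Qed.

Lemma vset_subst Q (s : var -> xtpoly) (p : xtpoly) :
  (forall m : {cmonom var}, m \in msupp p -> forall v, v \in finsupp m -> vset Q (s v)) ->
  vset Q (subst s p).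
Proof.
move=> h; rewrite substE; apply: vset_sum => m.
case: (boolP (m \in msupp p)) => hm; last first.
  by rewrite mcoeff_outdom // mul0r; apply: vset0.
apply: vsetM; first exact: vset_int.
rewrite /hs big_seq; apply: vset_prod => v hv.
by apply: vsetX; apply: h hm v hv.
Qed.

Lemma subst_ext (s1 s2 : var -> xtpoly) (p : xtpoly) :
  (forall m : {cmonom var}, m \in msupp p -> forall v, v \in finsupp m -> s1 v = s2 v) ->
  subst s1 p = subst s2 p.
Proof.
move=> h; rewrite !substE; apply: eq_big_seq => m hm.
have -> : hs s1 m = hs s2 m.
  by apply: eq_big_seq => v hv; rewrite (h m hm v hv).
by [].
Qed.

Lemma subst_comp (s1 s2 : var -> xtpoly) (p : xtpoly) :
  subst s2 (subst s1 p) = subst (fun v => subst s2 (s1 v)) p.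
Proof.
rewrite [subst s1 p]substE rmorph_sum [RHS]substE; apply: eq_bigr => m _.
by rewrite rmorphM rmorph_int /hs rmorph_prod; congr (_ * _); apply: eq_bigr => v _; rewrite rmorphXn.
Qed.

Lemma hs_ucm s v : hs s (ucm v) = s v.
Proof. by rewrite /hs mdomU big_seq_fset1 cmUU expr1. Qed.

Lemma hs_pvar (m : {cmonom var}) : hs pvar m = << m >>.
Proof.
move: {2}(mdeg m) (erefl (mdeg m)) => n; elim: n m => [|n IH] m hm.
  by rewrite (mdeg_eq0I hm) mmorph1 -mpolyC1E.
have [e|[v hv]] := fset_0Vmem (finsupp m).
  by move: hm; rewrite mdegE e big_seq_fset0.
set m' := divcm m (ucm v).
have em : m = mmul (ucm v) m'.
  apply/eqP/cmP => i; rewrite cmM divcmE !cmU.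
  have : (0 < m v)%N by rewrite lt0n cmE_neq0.
  by case: eqP => [<-|_] /= h0; lia.
move: hm; rewrite em mdegM mdegU add1n => /eq_add_S hm.
rewrite (hs_mmorph pvar).1 hs_ucm (IH m' hm) /pvar malgM_def fgmulUU mul1r.
by [].
Qed.

Lemma subst_id (p : xtpoly) : subst pvar p = p.
Proof.
rewrite substE [RHS]monalgE; apply: eq_bigr => m _.
rewrite hs_pvar.
have -> : ((p@_m)%:~R : xtpoly) = (p@_m)%:MP.
  by rewrite -[in RHS](intz (p@_m)) (rmorph_int (@malgC _ int)).
by rewrite malgM_def fgmulUU mulr1 mul1m.
Qed.

Arguments subst : simpl never.
Arguments pvar : simpl never.

Definition ren (f : var -> option var) (v : var) : xtpoly :=
  if f v is Some w then pvar w else 0.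

Lemma subst_ren_comp f g p :
  subst (ren f) (subst (ren g) p) = subst (ren (fun v => obind f (g v))) p.
Proof.
rewrite subst_comp; apply: subst_ext => m _ v _; rewrite /ren.
case: (g v) => [w|] /=; first by rewrite subst_pvar.
exact: rmorph0.
Qed.

Lemma subst_ren_ext f g p :
  (forall m : {cmonom var}, m \in msupp p -> forall v, v \in finsupp m -> f v = g v) ->
  subst (ren f) p = subst (ren g) p.
Proof. by move=> h; apply: subst_ext => m hm v hv; rewrite /ren (h m hm v hv). Qed.

Lemma subst_ren_id f p :
  (forall m : {cmonom var}, m \in msupp p -> forall v, v \in finsupp m -> f v = Some v) ->
  subst (ren f) p = p.
Proof.
move=> h; rewrite -[RHS]subst_id; apply: subst_ext => m hm v hv.
by rewrite /ren (h m hm v hv).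
Qed.

Lemma vset_ren (Q Q' : pred var) f p : vset Q p ->
  (forall v, Q v -> if f v is Some w then Q' w else true) -> vset Q' (subst (ren f) p).
Proof.
move=> hp hf; apply: vset_subst => m hm v hv; rewrite /ren.
move: (hf v (hp m hm v hv)); case: (f v) => [w|] hw; last exact: vset0.
exact: vset_pvar.
Qed.

Lemma subst_ren_pvar f v : subst (ren f) (pvar v) = ren f v.
Proof. exact: subst_pvar. Qed.

Definition rp (i : nat) (v : var) : option var :=
  match v with
  | inl k => if (k.+1 <= i)%N then Some (inl k) else if k.+1 == i.+1 then Some (inr i.-1)
             else Some (inl k.-1)
  | inr k => Some (inr k) end.
Definition rm (i : nat) (v : var) : option var :=
  match v with
  | inl k => if (k.+1 < i)%N then Some (inl k) else if k.+1 == i then Some (inr i.-1)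
             else Some (inl k.-1)
  | inr k => Some (inr k) end.
Definition th (i : nat) (v : var) : option var :=
  match v with
  | inl k => Some (inl k)
  | inr k => if (k.+1 < i)%N then Some (inr k) else Some (inr k.+1) end.
Definition at' (v : var) : option var :=
  match v with inl k => Some (inr k) | inr k => Some (inr k) end.
Definition sg (m : nat) (v : var) : option var :=
  match v with
  | inl k => Some (inl k)
  | inr k => if k.+1 == m then None else Some (inr k) end.

Definition sig (m : nat) : xtpoly -> xtpoly :=
  subst2 X (fun j => if j == m then 0 else T j).

Lemma RpE i p : Rplus i p = subst (ren (rp i)) p.
Proof.
apply: subst_ext => m _ [] k _ /=; rewrite /ren /=; last by [].
by case: (k.+1 <= i)%N => //; case: (k.+1 == i.+1).
Qed.
Lemma RmE i p : Rminus i p = subst (ren (rm i)) p.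
Proof.
apply: subst_ext => m _ [] k _ /=; rewrite /ren /=; last by [].
by case: (k.+1 < i)%N => //; case: (k.+1 == i).
Qed.
Lemma thE i p : that i p = subst (ren (th i)) p.
Proof.
apply: subst_ext => m _ [] k _ /=; rewrite /ren /=; first by [].
by case: (k.+1 < i)%N.
Qed.
Lemma atE p : atT p = subst (ren at') p.
Proof. by apply: subst_ext => m _ [] k _. Qed.
Lemma sigE m p : sig m p = subst (ren (sg m)) p.
Proof.
apply: subst_ext => m' _ [] k _ /=; rewrite /ren /=; first by [].
by case: (k.+1 == m).
Qed.

Definition Qx (a : nat) : pred var := fun v => if v is inl k then (k < a)%N else true.

Ltac ot := repeat (case: ifP => /= ?); try done; try lia; try (exfalso; lia);
  try (congr (Some (inl _)); lia); try (congr (Some (inr _)); lia).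

Lemma Rp_comm i m p : (0 < i)%N -> i != m -> Rplus i (sig m p) = sig m (Rplus i p).
Proof.
move=> i0 ne; rewrite !RpE !sigE !subst_ren_comp; apply: subst_ren_ext => _ _ [] k _ /=; ot.
Qed.

Lemma Rm_comm i m p : (0 < i)%N -> i != m -> Rminus i (sig m p) = sig m (Rminus i p).
Proof.
move=> i0 ne; rewrite !RmE !sigE !subst_ren_comp; apply: subst_ren_ext => _ _ [] k _ /=; ot.
Qed.

Lemma sig_XT i m : (0 < i)%N -> i != m -> sig m (X i - T i) = X i - T i.
Proof.
move=> i0 ne; rewrite sigE subst_is_additive /X /T.
congr (_ - _); first exact: subst_pvar.
rewrite subst_pvar /ren /=.
by rewrite (_ : (i.-1.+1 == m) = false); [|lia].
Qed.

Lemma sig_that i m q : (0 < i)%N -> (i < m)%N -> sig m (that i q) = that i (sig m.-1 q).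
Proof.
move=> i0 im; rewrite !thE !sigE !subst_ren_comp; apply: subst_ren_ext => _ _ [] k _ /=; ot.
Qed.

Lemma atT_sig a m q : (a < m)%N -> vset (Qx a) q -> atT (sig m q) = sig m (atT q).
Proof.
move=> am hq; rewrite !atE !sigE !subst_ren_comp; apply: subst_ren_ext => mm hm v hv.
move: (hq mm hm v hv); case: v {hv} => k /= hk; ot.
Qed.

Lemma Rp_id i q : vset (Qx i) q -> Rplus i q = q.
Proof.
move=> hq; rewrite RpE; apply: subst_ren_id => mm hm v hv.
move: (hq mm hm v hv); case: v {hv} => k /= hk; ot.
Qed.

Lemma Rm_id i q : vset (Qx i.-1) q -> Rminus i q = q.
Proof.
move=> hq; rewrite RmE; apply: subst_ren_id => mm hm v hv.
move: (hq mm hm v hv); case: v {hv} => k /= hk; ot.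
Qed.

Lemma Rm_vars M q : (0 < M)%N -> vset (Qx M) q -> vset (Qx M.-1) (Rminus M q).
Proof.
move=> M0 hq; rewrite RmE; apply: (vset_ren hq) => -[] k /= hk; ot.
Qed.

Lemma atT_id q : vset (Qx 0) q -> atT q = q.
Proof.
move=> hq; rewrite atE; apply: subst_ren_id => mm hm v hv.
by move: (hq mm hm v hv); case: v {hv}.
Qed.

Lemma sig_vars (Q : pred var) m q : (0 < m)%N -> vset Q q ->
  vset (predI Q (fun v => v != inr m.-1)) (sig m q).
Proof.
move=> m0 hq; rewrite sigE; apply: (vset_ren hq) => -[] k /= hk; rewrite ?hk //.
case: ifP => // hkm /=; rewrite hk /=; apply/eqP => -[]; lia.
Qed.

Lemma sig_kill m q : (0 < m)%N -> sig m q = q -> vset (fun v => v != inr m.-1) q.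
Proof.
move=> m0 e; rewrite -e; apply: vset_mono (sig_vars (Q := predT) m0 _) => [v /andP[]//|].
by move=> ? ? ? ?.
Qed.

Lemma xdown a g : (forall i, (a < i)%N -> Rplus i g = Rminus i g) -> vset (Qx a) g.
Proof.
move=> h.
pose M := (\max_(m <- msupp g) \max_(v <- finsupp m) (if v is inl k then k.+1 else 0))%N.
have hM : vset (Qx M) g.
  move=> m hm [k|k] hv //=.
  have h1 : (k.+1 <= \max_(v <- finsupp m) (if v is inl k then k.+1 else 0))%N.
    exact: (@leq_bigmax_seq _ _ _ (fun v : var => if v is inl k then k.+1 else 0) (inl k)).
  apply: (leq_trans h1).
  exact: (@leq_bigmax_seq _ _ _ (fun m : {cmonom var} => \max_(v <- finsupp m) (if v is inl k then k.+1 else 0))%N m).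
suff hs : forall n, vset (Qx (a + n)) g -> vset (Qx a) g.
  apply: (hs (M - a)%N); apply: vset_mono hM => -[k|k] //= hk; lia.
elim => [|n IH]; first by rewrite addn0.
rewrite addnS => hn; apply: IH.
have e : Rplus (a + n).+1 g = g by apply: Rp_id.
have hv := Rm_vars (ltn0Sn _ : (0 < (a + n).+1)%N) hn.
rewrite -(h (a + n).+1) ?e in hv; last by lia.
exact: hv.
Qed.

Lemma RpB i p q : Rplus i (p - q) = Rplus i p - Rplus i q. Proof. exact: subst_is_additive. Qed.
Lemma RmB i p q : Rminus i (p - q) = Rminus i p - Rminus i q. Proof. exact: subst_is_additive. Qed.
Lemma sigB m p q : sig m (p - q) = sig m p - sig m q. Proof. exact: subst_is_additive. Qed.
Lemma atB p q : atT (p - q) = atT p - atT q. Proof. exact: subst_is_additive. Qed.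
Lemma sigM m p q : sig m (p * q) = sig m p * sig m q. Proof. by rewrite !sigE rmorphM. Qed.
Lemma sig1 m : sig m 1 = 1. Proof. by rewrite sigE rmorph1. Qed.
Lemma sig0 m : sig m 0 = 0. Proof. by rewrite sigE rmorph0. Qed.

Lemma xpart P (hP : is_double_forest_family P) F : vset (Qx (\max_(i <- Qdes F) i)) (P F).
Proof.
have [_ [_ hE]] := hP F.
apply: xdown => i hi.
have hi1 : (1 <= i)%N by lia.
move: (hE i hi1); rewrite (_ : i \in Qdes F = false).
  by move/eqP; rewrite subr_eq0 => /eqP.
apply/negbTE/negP => hq.
have h : (i <= \max_(i <- Qdes F) i)%N := @leq_bigmax_seq _ (Qdes F) xpredT id _ hq isT.
lia.
Qed.

Lemma qdes_lt F i : i \in Qdes F -> (i < \max_(x <- supp F) x)%N.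
Proof. move=> hi; exact: (@leq_bigmax_seq _ (supp F) xpredT id _ (F1 hi) isT). Qed.

Lemma qmax_lt F : (\max_(i <- Qdes F) i <= (\max_(x <- supp F) x).-1)%N.
Proof. apply/bigmax_leqP_seq => i hi _; have := qdes_lt hi; lia. Qed.

Lemma alg4 (R : comRingType) (x y u w : R) : (x - u) - (y - w) = (x - y) - (u - w).
Proof. ring. Qed.

Lemma main_sig P (hP : is_double_forest_family P) : forall n F, (nodesF F < n)%N ->
  forall m, (\max_(x <- supp F) x <= m)%N -> (0 < m)%N -> sig m (P F) = P F.
Proof.
elim => [//|n IH] F hn m hm m0.
have [_ [hat hE]] := hP F.
have hx := @xpart P hP F.
set a := \max_(i <- Qdes F) i in hx.
have ham : (a < m)%N by have := qmax_lt F; rewrite -/a; lia.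
set f := P F in hat hE hx *.
have hsx : vset (Qx a) (sig m f).
  by apply: vset_mono (sig_vars m0 hx) => v /andP[].
pose g := f - sig m f.
have hg : vset (Qx a) g := vsetB hx hsx.
have hE' : forall i, (0 < i)%N -> Rplus i g = Rminus i g.
  move=> i i0.
  case: (ltnP a i) => hai.
    have h1 : vset (Qx i.-1) g by apply: vset_mono hg => -[k|k] //=; lia.
    have h2 : vset (Qx i) g by apply: vset_mono hg => -[k|k] //=; lia.
    by rewrite (Rp_id h2) (Rm_id h1).
  have ne : i != m by apply/eqP; lia.
  pose D := Rplus i f - Rminus i f.
  have e : Rplus i g - Rminus i g = D - sig m D.
    rewrite /g RpB RmB Rp_comm // Rm_comm // /D sigB.
    exact: alg4.
  apply/eqP; rewrite -subr_eq0 e /D (hE i i0).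
  case: ifP => hq; last by rewrite sig0 subrr eqxx.
  have him : (i < m)%N by have := qdes_lt hq; lia.
  have hn' : (nodesF (contract F i) < n)%N by have := F3 hq; lia.
  have hm' : (\max_(x <- supp (contract F i)) x <= m.-1)%N.
    by apply/bigmax_leqP_seq => j hj _; have := F2 hq hj; lia.
  have m1 : (0 < m.-1)%N by lia.
  rewrite sigM (sig_XT i0 ne) (sig_that _ i0 him) (IH _ hn' _ hm' m1) subrr.
  exact: eqxx.
have g0x : vset (Qx 0) g by apply: xdown => i hi; exact: hE'.
have : atT g = 0.
  rewrite /g atB (atT_sig ham hx) hat.
  by case: (is_empty_forest F); rewrite ?sig1 ?sig0 subrr.
rewrite atT_id // => /eqP; rewrite subr_eq0 => /eqP e.
by rewrite -e.
Qed.
Theorem corollary4p8 (P : forest -> xtpoly) (hP : is_double_forest_family P)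
  (F : forest) :
  vars_within (\max_(i <- Qdes F) i) (\max_(i <- supp F) i).-1 (P F) /\
  (forall n : nat, {subset supp F <= [pred j | (1 <= j <= n)%N]} ->
     vars_within n n.-1 (P F)).
Proof.
have part1 : vars_within (\max_(i <- Qdes F) i) (\max_(i <- supp F) i).-1 (P F).
  move=> mm hm [k|k] hv.
    exact: (@xpart P hP F mm hm (inl k) hv).
  rewrite ltnNge; apply/negP => hk.
  have hk' : (\max_(i <- supp F) i <= k.+1)%N by lia.
  have e := main_sig hP (ltnSn (nodesF F)) hk' (ltn0Sn k).
  have := sig_kill (ltn0Sn k) e hm hv.
  by rewrite /= eqxx.
split => // n hsub.
have hs : (\max_(i <- supp F) i <= n)%N.
  by apply/bigmax_leqP_seq => j hj _; have := hsub j hj; rewrite inE; lia.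
have hq := qmax_lt F.
move=> mm hm [k|k] hv; have := part1 mm hm _ hv => /=; lia.
Qed.
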